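(* Let $X$ be a connected weighted non-bipartite graph with vertex $u$. If $0\notin\Phi_{\mathbf e_u}(X)$, then the two copies $(0,u)$ and $(1,u)$ of $u$ in $K_2\times X$ are not sedentary. Additionally, if $A(X)$ is nonsingular, then no vertex of $K_2\times X$ is sedentary.
   Context: Graphs are simple, connected, undirected, with nonzero real edge weights; $A(X)$ is the weighted adjacency matrix, $E_\lambda$ the orthogonal projection onto its $\lambda$-eigenspace, and $\Phi_{\mathbf e_u}(X)=\{\lambda:E_\lambda\mathbf e_u\ne0\}$. The bipartite double $K_2\times X$ has vertex set $\{0,1\}\times V(X)$ and adjacency matrix $A(K_2)\otimes A(X)$. With $U(t)=e^{itA}$, a vertex $u$ is not sedentary if $\inf_{t>0}|U(t)_{u,u}|=0$ and sedentary if this infimum is positive. *)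

(* Defs.v *)
From HB Require Import structures.
From mathcomp Require Import all_boot all_order all_algebra.
From mathcomp Require Import all_classical all_reals all_analysis.
Set Implicit Arguments. Unset Strict Implicit. Unset Printing Implicit Defensive.
Import Order.TTheory GRing.Theory Num.Theory.
Local Open Scope ring_scope.
Local Open Scope classical_set_scope.

Section Defs.
Variable R : realType.

Definition weighted_graph n (A : 'M[R]_n) : Prop :=
  A^T = A /\ (forall i, A i i = 0).

Definition adj n (A : 'M[R]_n) : rel 'I_n := fun i j => A i j != 0.

Definition graph_connected n (A : 'M[R]_n) : Prop :=
  forall i j, connect (adj A) i j.

Definition bipartite n (A : 'M[R]_n) : Prop :=
  exists f : 'I_n -> bool, forall i j, adj A i j -> f i != f j.

Definition evec n (u : 'I_n) : 'cV[R]_n := delta_mx u 0.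

(* E is the orthogonal projection onto the lambda-eigenspace of A:
   symmetric idempotent matrix whose (row = column) space is the eigenspace *)
Definition eig_proj n (A : 'M[R]_n) (lam : R) (E : 'M[R]_n) : Prop :=
  E *m E = E /\ E^T = E /\ (E == eigenspace A lam)%MS.

Definition Phi n (A : 'M[R]_n) (u : 'I_n) : set R :=
  [set lam | exists E, eig_proj A lam E /\ E *m evec u != 0].

(* --- bipartite double K_2 x X: adjacency A(K_2) (x) A(X) = [[0,A],[A,0]],
   vertex (0,u) is lshift n u and (1,u) is rshift n u --- *)
Definition double_adj n (A : 'M[R]_n) : 'M[R]_(n + n) := block_mx 0 A A 0.
Definition copy0 n (u : 'I_n) : 'I_(n + n) := lshift n u.
Definition copy1 n (u : 'I_n) : 'I_(n + n) := rshift n u.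

(* --- transition matrix U(t) = exp(itA) = cos(tA) + i sin(tA),
   each part given by its defining (entrywise convergent) power series --- *)
Definition mxpow m (M : 'M[R]_m) (k : nat) : 'M[R]_m := iter k (mulmx M) 1%:M.

Definition cos_mx m (M : 'M[R]_m) (t : R) : 'M[R]_m :=
  \matrix_(i, j) limn (fun N : nat =>
     (\sum_(k < N) (((-1) ^+ k * t ^+ (2 * k) / ((2 * k)`!)%:R) *: mxpow M (2 * k))) i j).

Definition sin_mx m (M : 'M[R]_m) (t : R) : 'M[R]_m :=
  \matrix_(i, j) limn (fun N : nat =>
     (\sum_(k < N) (((-1) ^+ k * t ^+ (2 * k).+1 / ((2 * k).+1`!)%:R)
                      *: mxpow M (2 * k).+1)) i j).

(* |U(t)_{u,u}| : modulus of the complex number cos(tA)_{uu} + i sin(tA)_{uu} *)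
Definition absU m (M : 'M[R]_m) (t : R) (u : 'I_m) : R :=
  Num.sqrt (cos_mx M t u u ^+ 2 + sin_mx M t u u ^+ 2).

Definition sedentary m (M : 'M[R]_m) (u : 'I_m) : Prop :=
  0 < inf [set absU M t u | t in [set t : R | 0 < t]].

Definition not_sedentary m (M : 'M[R]_m) (u : 'I_m) : Prop :=
  inf [set absU M t u | t in [set t : R | 0 < t]] = 0.

End Defs.

(* Main.v *)
Require Import Defs.
From HB Require Import structures.
From mathcomp Require Import all_boot all_order all_algebra.
From mathcomp Require Import all_classical all_reals all_analysis.
From mathcomp Require Import ring lra.
Import Order.TTheory GRing.Theory Num.Theory numFieldNormedType.Exports.
From mathcomp Require Import complex.
Local Open Scope ring_scope.
Local Open Scope classical_set_scope.
Section D.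
Variable R : realType.

Lemma is_derive_csin (c l x : R) :
  is_derive x 1 (fun t => c * sin (l * t)) (c * (cos (l * x) * l)).
Proof.
have h1 : is_derive x 1 (fun t : R => l * t) l.
  have := @is_deriveZ R R R id l x 1 1 (is_derive_id x 1).
  by rewrite /GRing.scale /= mulr1.
have h2 := @is_derive1_comp R sin (fun t => l * t) x _ _ (is_derive_sin (l * x)) h1.
exact: (@is_deriveZ R R R _ c x 1 _ h2).
Qed.

Lemma is_derive_ccos (c l x : R) :
  is_derive x 1 (fun t => c * cos (l * t)) (c * (- sin (l * x) * l)).
Proof.
have h1 : is_derive x 1 (fun t : R => l * t) l.
  have := @is_deriveZ R R R id l x 1 1 (is_derive_id x 1).
  by rewrite /GRing.scale /= mulr1.
have h2 := @is_derive1_comp R cos (fun t => l * t) x _ _ (is_derive_cos (l * x)) h1.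
exact: (@is_deriveZ R R R _ c x 1 _ h2).
Qed.

Variables (n : nat) (w lam : 'I_n -> R).
Hypothesis w0 : forall j, 0 <= w j.
Hypothesis w1 : \sum_j w j = 1.
Hypothesis wl : forall j, w j != 0 -> lam j != 0.

Let f (t : R) : R := \sum_j w j * cos (lam j * t).
Let g (t : R) : R := \sum_j (w j / lam j) * sin (lam j * t).

Lemma g_der (x : R) : is_derive x 1 g (f x).
Proof.
have -> : g = \sum_(j < n) (fun t => (w j / lam j) * sin (lam j * t)).
  by rewrite fct_sumE.
have -> : f x = \sum_(j < n) ((w j / lam j) * (cos (lam j * x) * lam j)).
  apply: eq_bigr => j _.
  have [->|/wl lj] := eqVneq (w j) 0; first by rewrite !mul0r.
  by rewrite [RHS]mulrCA divfK // mulrC.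
apply: is_derive_sum => j; exact: is_derive_csin.
Qed.

Lemma f_der (x : R) : is_derive x 1 f (\sum_j w j * (- sin (lam j * x) * lam j)).
Proof.
have -> : f = \sum_(j < n) (fun t => w j * cos (lam j * t)).
  by rewrite fct_sumE.
apply: is_derive_sum => j; exact: is_derive_ccos.
Qed.

Lemma f_cont : continuous (f : R -> R).
Proof.
move=> x; have [d _] := f_der x.
by apply/differentiable_continuous/derivable1_diffP.
Qed.

Lemma g_bound t : `|g t| <= \sum_j `|w j / lam j|.
Proof.
rewrite /g; apply: le_trans (ler_norm_sum _ _ _) _.
apply: ler_sum => j _; rewrite normrM.
by rewrite -[X in _ <= X]mulr1 ler_wpM2l // sin_max.
Qed.

Lemma f0 : f 0 = 1.
Proof. by rewrite /f -w1; apply: eq_bigr => j _; rewrite mulr0 cos0 mulr1. Qed.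

Lemma f_small e : 0 < e -> exists2 t, 0 < t & `|f t| < e.
Proof.
move=> e0; apply: contrapT => H.
have H' t : 0 < t -> e <= `|f t|.
  by move=> t0; rewrite leNgt; apply/negP => ft; apply: H; exists t.
have [[t0 t00 ft0]|nneg] := pselect (exists2 t, 0 < t & f t < 0).
  have fc1 : {within `[0, t0], continuous f}.
    by apply: continuous_subspaceT => x; exact: f_cont.
  have fc2 : Num.min (f 0) (f t0) <= 0 <= Num.max (f 0) (f t0).
    rewrite f0 /Num.min /Num.max ltNge (ltW (lt_trans ft0 ltr01)) /=.
    by rewrite (ltW ft0) ler01.
  have [c cin fc] := @IVT R f 0 t0 0 (ltW t00) fc1 fc2.
  have c0 : 0 < c.
    rewrite lt_neqAle; move: cin; rewrite in_itv /= => /andP[-> _].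
    by rewrite andbT; apply/eqP => c0; move: fc; rewrite -c0 f0 => /eqP; rewrite oner_eq0.
  by have := H' c c0; rewrite fc normr0 leNgt e0.
have fge t : 0 < t -> e <= f t.
  move=> t0; have := H' t t0; rewrite ger0_norm //.
  by rewrite leNgt; apply/negP => ft; apply: nneg; exists t.
set M := \sum_j `|w j / lam j|.
have M0 : 0 <= M by apply: sumr_ge0 => j _.
set T := (M *+ 2 + 1) / e.
have T0 : 0 < T by rewrite divr_gt0 // ltr_wpDl // mulrn_wge0.
have gc : {within `[0, T], continuous g}.
  apply: continuous_subspaceT => x.
  have [dg _] := g_der x.
  by apply/differentiable_continuous/derivable1_diffP.
have [c cin gT] := @MVT R g f 0 T T0 (fun x _ => g_der x) gc.
have c0 : 0 < c by move: cin; rewrite in_itv /= => /andP[].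
have ec := fge c c0.
have h1 : M *+ 2 + 1 <= g T - g 0.
  rewrite gT subr0 -[X in X <= _](divfK (lt0r_neq0 e0)) -/T mulrC.
  by apply: ler_wpM2r => //; exact: ltW.
have h2 : g T - g 0 <= M *+ 2.
  apply: le_trans (ler_norm _) _; apply: le_trans (ler_normB _ _) _.
  by rewrite mulr2n lerD // g_bound.
have := le_trans h1 h2; lra.
Qed.
End D.
Lemma inf_zero (R : realType) (h : R -> R) : (forall t, 0 <= h t) ->
  (forall e, 0 < e -> exists2 t, 0 < t & h t < e) ->
  inf [set h t | t in [set t : R | 0 < t]] = 0.
Proof.
move=> h0 hs.
have lb : lbound [set h t | t in [set t : R | 0 < t]] 0.
  by move=> _ [t _ <-].
have ne : nonempty [set h t | t in [set t : R | 0 < t]].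
  by exists (h 1); exists 1 => //=; exact: ltr01.
apply/eqP; rewrite eq_le lb_le_inf // andbT.
rewrite leNgt; apply/negP => i0.
have [t t0 ht] := hs _ i0.
have := ge_inf (ex_intro _ 0 lb) (ex_intro2 _ _ t t0 erefl).
by rewrite leNgt ht.
Qed.
Section B.
Variable R : realType.

Lemma mulmx_tr_eq0 m p (M : 'M[R]_(m, p)) : M *m M^T = 0 -> M = 0.
Proof.
move=> H; apply/matrixP => i j; rewrite mxE.
have /matrixP /(_ i i) := H; rewrite !mxE => /eqP.
under eq_bigr do rewrite mxE.
rewrite psumr_eq0; last by move=> k _; rewrite -expr2 sqr_ge0.
move=> /allP /(_ j (mem_index_enum _)) /implyP /(_ isT).
by rewrite mulf_eq0 orbb => /eqP.
Qed.

Lemma exists_proj n (A : 'M[R]_n) : exists E : 'M[R]_n, eig_proj A 0 E.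
Proof.
set K := eigenspace A 0.
set B := row_base K.
have hBK : (B :=: K)%MS by exact: eq_row_base.
have hBf : row_free B by exact: row_base_free.
clearbody B.
set G := B *m B^T.
have Gu : G \in unitmx.
  rewrite -row_free_unit -kermx_eq0; apply/eqP.
  set X := kermx G.
  have XG : X *m G = 0 by rewrite /X mulmx_ker.
  have XB : X *m B = 0.
    apply: mulmx_tr_eq0.
    by rewrite trmx_mul mulmxA -(mulmxA X) -/G XG mul0mx.
  by apply/eqP; rewrite -(mulmx_free_eq0 _ hBf) XB.
have GT : G^T = G by rewrite /G trmx_mul trmxK.
have BE : B *m (B^T *m invmx G *m B) = B.
  by rewrite !mulmxA -/G mulmxV // mul1mx.
exists (B^T *m invmx G *m B); rewrite /eig_proj; split; last split.
- by rewrite -[LHS]mulmxA BE.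
- by rewrite !trmx_mul trmxK trmx_inv GT mulmxA.
- apply/andP; split; rewrite -/K -hBK; first exact: submxMl.
  by rewrite -{1}BE submxMl.
Qed.


Lemma notPhi_ker n (A : 'M[R]_n) u : ~ Phi A u 0 ->
  forall x : 'rV[R]_n, x *m A = 0 -> x 0 u = 0.
Proof.
move=> nP x xA; have [E [E2 [ET EK]]] := exists_proj _ A.
have Eu : E *m evec R u = 0.
  apply/eqP; apply: contrapT => h; apply: nP; exists E.
  by split => //; apply/negP.
have xK : (x <= eigenspace A 0)%MS.
  by apply/sub_kermxP; rewrite mulmxBr xA mul_mx_scalar scale0r subr0.
have xE : (x <= E)%MS by rewrite (eqmxP EK).
have [y xy] := submxP xE.
have -> : x 0 u = (x *m evec R u) 0 0 by rewrite /evec -colE mxE.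
by rewrite xy -mulmxA Eu mulmx0 mxE.
Qed.

Lemma unit_ker n (A : 'M[R]_n) u : A \in unitmx ->
  forall x : 'rV[R]_n, x *m A = 0 -> x 0 u = 0.
Proof.
move=> Au x xA; have : x = 0 by rewrite -(mulmxK Au x) xA mul0mx.
by move=> ->; rewrite mxE.
Qed.

End B.
Section C.
Variable R : realType.

Lemma cvg_finsum m (F : 'I_m -> nat -> R) (L : 'I_m -> R) :
  (forall j, F j @ \oo --> L j) -> (fun N => \sum_j F j N) @ \oo --> \sum_j L j.
Proof.
elim: m F L => [|m IH] F L H.
  rewrite big_ord0; under eq_fun do rewrite big_ord0; exact: cvg_cst.
rewrite big_ord_recr /=; under eq_fun do rewrite big_ord_recr /=.
apply: cvgD; last exact: H.
exact: (IH (fun j => F (widen_ord (leqnSn m) j))).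
Qed.

Lemma cos_series_cvg m (w lam : 'I_m -> R) t :
  (fun N => \sum_(k < N) ((-1) ^+ k * t ^+ (2 * k) / ((2 * k)`!)%:R *
      \sum_j w j * lam j ^+ (2 * k))) @ \oo --> \sum_j w j * cos (lam j * t).
Proof.
have E : (fun N => \sum_(k < N) ((-1) ^+ k * t ^+ (2 * k) / ((2 * k)`!)%:R *
      \sum_j w j * lam j ^+ (2 * k))) =
   (fun N => \sum_j w j * series (cos_coeff' (lam j * t)) N).
  apply/funext => N; rewrite /series /=.
  under eq_bigr do rewrite mulr_sumr.
  rewrite exchange_big /=; apply: eq_bigr => j _.
  rewrite big_mkord mulr_sumr; apply: eq_bigr => k _.
  rewrite /cos_coeff' -muln2 [(k * 2)%N]mulnC exprMn.
  rewrite -exprnP; ring.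
rewrite E; apply: cvg_finsum => j.
apply: cvgMl_tmp; exact: cvg_cos_coeff'.
Qed.

Lemma sin_series_cvg m (M : 'M[R]_m) t u :
  (forall k, mxpow M (2 * k).+1 u u = 0) -> sin_mx M t u u = 0.
Proof.
move=> H; rewrite /sin_mx mxE.
under eq_fun do rewrite summxE; under eq_fun do under eq_bigr do rewrite mxE H mulr0.
under eq_fun do rewrite big1 //.
exact: lim_cst.
Qed.


Lemma mxpow_double n (A : 'M[R]_n) k : mxpow (double_adj A) k =
  if odd k then block_mx 0 (mxpow A k) (mxpow A k) 0
  else block_mx (mxpow A k) 0 0 (mxpow A k).
Proof.
elim: k => [|k IH].
  by rewrite /= /mxpow /= -scalar_mx_block.
rewrite [LHS]/mxpow /= -/(mxpow _ k) IH /double_adj.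
case: (odd k) => /=; rewrite mulmx_block !mul0mx !mulmx0 ?add0r ?addr0 //.
Qed.

Lemma double_diag n (A : 'M[R]_n) u k (v : 'I_(n + n)) :
  v = copy0 u \/ v = copy1 u ->
  mxpow (double_adj A) k v v = if odd k then 0 else mxpow A k u u.
Proof.
move=> [->|->]; rewrite mxpow_double; case: (odd k);
  by rewrite /copy0 /copy1 ?block_mxEul ?block_mxEdr ?mxE.
Qed.

Lemma absU_double n (A : 'M[R]_n) u (v : 'I_(n + n)) m (w lam : 'I_m -> R) t :
  (forall k, mxpow A k u u = \sum_j w j * lam j ^+ k) ->
  v = copy0 u \/ v = copy1 u ->
  absU (double_adj A) t v = `|\sum_j w j * cos (lam j * t)|.
Proof.
move=> dec hv; rewrite /absU.
rewrite sin_series_cvg; last first.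
  by move=> k; rewrite (@double_diag n A u _ v hv) -[(2 * k).+1]addn1 oddD oddM.
have -> : cos_mx (double_adj A) t v v = \sum_j w j * cos (lam j * t).
  rewrite /cos_mx mxE.
  under eq_fun do rewrite summxE; under eq_fun do under eq_bigr do
    rewrite mxE (@double_diag n A u _ v hv) oddM /= dec.
  apply: cvg_lim => //; exact: cos_series_cvg.
by rewrite expr0n /= addr0 sqrtr_sqr.
Qed.

End C.
Section A.
Variable R : realType.
Local Notation C := R[i].
Local Notation rc := (real_complex R).

Lemma Re_sum m (F : 'I_m -> C) : Re (\sum_j F j) = \sum_j Re (F j).
Proof. by apply: (big_morph _ (fun a b => _) (erefl _)) => [[a b] [c d]]. Qed.
Lemma Im_sum m (F : 'I_m -> C) : Im (\sum_j F j) = \sum_j Im (F j).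
Proof. by apply: (big_morph _ (fun a b => _) (erefl _)) => [[a b] [c d]]. Qed.

Lemma mxpow_map n (A : 'M[R]_n) k :
  map_mx rc (mxpow A k) = iter k (mulmx (map_mx rc A)) 1%:M.
Proof.
elim: k => [|k IH]; first by rewrite /mxpow /= map_mx1.
by rewrite [mxpow A _]/mxpow /= -/(mxpow A k) map_mxM IH.
Qed.

Lemma conj_mul (z : C) : Num.conj z * z = rc (Re z ^+ 2 + Im z ^+ 2).
Proof.
case: z => a b; rewrite /Num.conj /=; simpc.
by apply/eqP; rewrite eq_complex /= !expr2 eqxx /=; apply/eqP; ring.
Qed.

Lemma spectral_weights n (A : 'M[R]_n) u : A^T = A ->
  exists w lam : 'I_n -> R, (forall j, 0 <= w j) /\
    (forall k, mxpow A k u u = \sum_j w j * lam j ^+ k) /\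
    (forall j, w j != 0 -> lam j = 0 -> exists x : 'rV[R]_n, x *m A = 0 /\ x 0 u != 0).
Proof.
move=> AT.
set Ac := map_mx rc A.
have Aher : Ac \is hermsymmx.
  apply/is_hermitianmxP; rewrite expr0 scale1r.
  apply/matrixP => i j; rewrite !mxE.
  have -> : A j i = A i j by rewrite -{1}AT mxE.
  by rewrite /Num.conj /=; simpc.
have Anor : Ac \is normalmx by exact: hermitian_normalmx.
set P := spectralmx Ac; set d := spectral_diag Ac.
have hP : Ac = invmx P *m diag_mx d *m P := orthomx_spectralP Anor.
have Pu : P \is unitarymx := spectral_unitarymx Ac.
set Pt := (P ^t*)%sesqui.
have PPt : P *m Pt = 1%:M := unitarymxP Pu.
have PtP : Pt *m P = 1%:M := mulmx1C PPt.
have hP' : Ac = Pt *m diag_mx d *m P by rewrite hP invmx_unitary.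
have dR : forall j, d 0 j = rc (Re (d 0 j)).
  move=> j; have /matrixP /(_ 0 j) := realmxC (hermitian_spectral_diag_real Aher).
  rewrite mxE; case: (d 0 j) => a b /= [] /eqP.
  by rewrite eq_sym -subr_eq0 opprK -mulr2n mulrn_eq0 /= => /eqP ->.
have pw : forall k, iter k (mulmx Ac) 1%:M = Pt *m diag_mx (\row_j d 0 j ^+ k) *m P.
  elim=> [|k IH].
    have -> : diag_mx (\row_j d 0 j ^+ 0) = 1%:M.
      by apply/matrixP => i j; rewrite !mxE expr0.
    by rewrite mulmx1 PtP.
  rewrite /= IH {1}hP' !mulmxA -(mulmxA _ P Pt) PPt mulmx1.
  rewrite -(mulmxA _ (diag_mx d)) mulmx_diag.
  by congr (_ *m diag_mx _ *m _); apply/rowP => j; rewrite !mxE exprS.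
pose w j := Re (P j u) ^+ 2 + Im (P j u) ^+ 2.
pose lam j := Re (d 0 j).
exists w, lam; split; [|split].
- by move=> j; rewrite /w addr_ge0 // sqr_ge0.
- move=> k; apply: complexI.
  have -> : rc (mxpow A k u u) = (map_mx rc (mxpow A k)) u u by rewrite mxE.
  rewrite mxpow_map pw mul_mx_diag !mxE rmorph_sum; apply: eq_bigr => j _.
  rewrite !mxE rmorphM rmorphXn /= -dR -/(w j) mulrAC conj_mul.
  by [].
move=> j wj lj.
have PAc : P *m Ac = diag_mx d *m P by rewrite hP' !mulmxA PPt mul1mx.
set p := row j P.
have pA : p *m Ac = 0.
  rewrite /p -row_mul PAc mul_diag_mx; apply/rowP => l; rewrite !mxE dR.
  by move: lj; rewrite /lam => ->; rewrite mul0r.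
have hRe : map_mx (@Re R) p *m A = 0.
  apply/rowP => l; have /rowP /(_ l) := pA; rewrite !mxE => /(congr1 (@Re R)).
  rewrite Re_sum /= => H; apply: etrans H; apply: eq_bigr => i _; rewrite !mxE.
  by case: (P j i) => a b /=; rewrite mulr0 subr0.
have hIm : map_mx (@Im R) p *m A = 0.
  apply/rowP => l; have /rowP /(_ l) := pA; rewrite !mxE => /(congr1 (@Im R)).
  rewrite Im_sum /= => H; apply: etrans H; apply: eq_bigr => i _; rewrite !mxE.
  by case: (P j i) => a b /=; rewrite mulr0 add0r.
have [re0|re0] := eqVneq (Re (P j u)) 0.
  exists (map_mx (@Im R) p); split => //; rewrite !mxE.
  apply: contra wj => /eqP im0; rewrite /w re0 im0; by rewrite expr0n /= addr0.
by exists (map_mx (@Re R) p); split => //; rewrite !mxE.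
Qed.
End A.

Section Main.
Variable R : realType.

Lemma key n (A : 'M[R]_n) u : A^T = A ->
  (forall x : 'rV[R]_n, x *m A = 0 -> x 0 u = 0) ->
  forall v, v = copy0 u \/ v = copy1 u -> not_sedentary (double_adj A) v.
Proof.
move=> AT hk v hv.
have [w [lam [w0 [dec ker]]]] := @spectral_weights R n A u AT.
have w1 : \sum_j w j = 1.
  have := dec 0%N; rewrite /mxpow /= mxE eqxx mulr1n => H; rewrite [RHS]H.
  by apply: eq_bigr => j _; rewrite expr0 mulr1.
have wl : forall j, w j != 0 -> lam j != 0.
  move=> j wj; apply/eqP => lj; have [x [xA xu]] := ker j wj lj.
  by move: xu; rewrite (hk x xA) eqxx.
rewrite /not_sedentary; apply: (@inf_zero R).
  by move=> t; rewrite /absU sqrtr_ge0.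
move=> e e0; have [t t0 ht] := @f_small R n w lam w1 wl e e0.
by exists t => //; rewrite (@absU_double R n A u v n w lam t dec hv).
Qed.

End Main.

Local Close Scope classical_set_scope.

Theorem theorem30 (R : realType) (n : nat) (A : 'M[R]_n) (u : 'I_n) :
  weighted_graph A -> graph_connected A -> ~ bipartite A ->
  (~ Phi A u 0 ->
     not_sedentary (double_adj A) (copy0 u) /\
     not_sedentary (double_adj A) (copy1 u)) /\
  (A \in unitmx -> forall v : 'I_(n + n), not_sedentary (double_adj A) v).
Proof.
move=> [AT _] _ _; split.
  move=> nP; have hk := @notPhi_ker R n A u nP.
  by split; apply: (@key R n A _ AT hk); [left|right].
move=> Au v; rewrite -(splitK v); case: (fintype.split v) => a /=.
  by apply: (@key R n A _ AT (@unit_ker R n A a Au)); left.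
by apply: (@key R n A _ AT (@unit_ker R n A a Au)); right.
Qed.
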